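(* Let $\Phi:[a,b]\to\mathbb{C}$ be continuous and nowhere zero, let $x_0\in[a,b]$, and let $X^{(k)}=X^{(k)}(x_0,x)$, $\widetilde X^{(k)}=\widetilde X^{(k)}(x_0,x)$ be the $\Phi$-power functions defined below. Then for every finite even $n\ge 2$ and every $x\in[a,b]$, $$\sum_{k=0}^n (-1)^k\binom{n}{k}X^{(k)}(x_0,x)\,\widetilde X^{(n-k)}(x_0,x)=0,$$ equivalently $\widetilde X^{(n)}=\sum_{k=1}^n(-1)^{k+1}\binom{n}{k}X^{(k)}\widetilde X^{(n-k)}$.
   Context: For $x_0,x\in[a,b]$ the $\Phi$-power functions are defined recursively by $X^{(0)}(x_0,x)\equiv 1$, $\widetilde X^{(0)}(x_0,x)\equiv 1$ and, for $n\ge 1$, $$X^{(n)}(x_0,x)=n\int_{x_0}^x X^{(n-1)}(x_0,\xi)\,\big(\Phi(\xi)\big)^{(-1)^n}\,d\xi,\qquad \widetilde X^{(n)}(x_0,x)=n\int_{x_0}^x \widetilde X^{(n-1)}(x_0,\xi)\,\Big(\frac{1}{\Phi(\xi)}\Big)^{(-1)^n}\,d\xi.$$ *)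

(* Defs.v *)
From Stdlib Require Import Reals.
From Coquelicot Require Import Coquelicot.
Open Scope R_scope.

(* z^((-1)^n): z if n is even, z^{-1} if n is odd. *)
Definition powm1 (n : nat) (z : C) : C :=
  if Nat.even n then z else Cinv z.

Fixpoint Xpow (Phi : R -> C) (x0 : R) (n : nat) (x : R) : C :=
  match n with
  | O => RtoC 1
  | S m => Cmult (RtoC (INR (S m)))
             (@RInt C_R_CompleteNormedModule (fun xi => Cmult (Xpow Phi x0 m xi) (powm1 (S m) (Phi xi))) x0 x)
  end.

Fixpoint Xtpow (Phi : R -> C) (x0 : R) (n : nat) (x : R) : C :=
  match n with
  | O => RtoC 1
  | S m => Cmult (RtoC (INR (S m)))
             (@RInt C_R_CompleteNormedModule (fun xi => Cmult (Xtpow Phi x0 m xi) (powm1 (S m) (Cinv (Phi xi)))) x0 x)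
  end.

(* Main.v *)
Require Import Defs.
From Stdlib Require Import Reals Lra Lia.
From Coquelicot Require Import Coquelicot.
Open Scope R_scope.

Lemma cont_fst (f : R -> C) x : continuous f x -> continuous (fun t => fst (f t)) x.
Proof.
  intros H. apply (continuous_comp f fst). exact H.
  destruct (f x) as [u v]. apply continuous_fst.
Qed.

Lemma cont_snd (f : R -> C) x : continuous f x -> continuous (fun t => snd (f t)) x.
Proof.
  intros H. apply (continuous_comp f snd). exact H.
  destruct (f x) as [u v]. apply continuous_snd.
Qed.

Lemma cont_C (f : R -> C) x : continuous (fun t => fst (f t)) x -> continuous (fun t => snd (f t)) x -> continuous f x.
Proof.
  intros H1 H2.
  apply (continuous_ext (fun t => (fst (f t), snd (f t)))).
  { intros t. destruct (f t); reflexivity. }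
  apply (continuous_comp_2 (V:=R_UniformSpace) (W:=R_UniformSpace) (X:=C_UniformSpace)
     (fun t => fst (f t)) (fun t => snd (f t)) (fun u v => (u, v))); auto.
  apply (continuous_ext (fun y : R*R => y)).
  { intros [u v]; reflexivity. }
  apply continuous_id.
Qed.

Lemma der_fst (f : R -> C) x d : is_derive f x d -> is_derive (fun t => fst (f t)) x (fst d).
Proof.
  intros H. unfold is_derive in *.
  eapply filterdiff_ext_lin.
  apply (filterdiff_comp' (K:=R_AbsRing) (V:=C_R_NormedModule) (W:=R_NormedModule) f fst x _ fst H).
  apply filterdiff_linear. apply (is_linear_fst (U:=R_NormedModule) (V:=R_NormedModule)).
  intros y. reflexivity.
Qed.

Lemma der_snd (f : R -> C) x d : is_derive f x d -> is_derive (fun t => snd (f t)) x (snd d).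
Proof.
  intros H. unfold is_derive in *.
  eapply filterdiff_ext_lin.
  apply (filterdiff_comp' (K:=R_AbsRing) (V:=C_R_NormedModule) (W:=R_NormedModule) f snd x _ snd H).
  apply filterdiff_linear. apply (is_linear_snd (U:=R_NormedModule) (V:=R_NormedModule)).
  intros y. reflexivity.
Qed.

Lemma der_C (f : R -> C) x d1 d2 : is_derive (fun t => fst (f t)) x d1 -> is_derive (fun t => snd (f t)) x d2 -> is_derive f x (d1, d2).
Proof.
  intros H1 H2. unfold is_derive in *.
  apply (filterdiff_ext (fun t => (fst (f t), snd (f t)))).
  { intros t. destruct (f t); reflexivity. }
  eapply filterdiff_ext_lin.
  apply (filterdiff_comp'_2 (K:=R_AbsRing) (U:=R_NormedModule) (V:=R_NormedModule) (W:=C_R_NormedModule)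
     (fun t => fst (f t)) (fun t => snd (f t)) (fun u v => (u, v)) x _ _ (fun u v => (u,v)) H1 H2).
  apply (filterdiff_ext_lin _ (fun y => y)).
  apply (filterdiff_ext (fun y => y)). intros [u v]; reflexivity.
  apply filterdiff_id. intros [u v]; reflexivity.
  intros y. reflexivity.
Qed.

Lemma is_derive_eq {V : NormedModule R_AbsRing} (f : R -> V) x l l' : is_derive f x l -> l = l' -> is_derive f x l'.
Proof. intros H ->; exact H. Qed.

Lemma rder_mult (f g : R -> R) x a b : is_derive f x a -> is_derive g x b -> is_derive (fun t => f t * g t) x (a * g x + f x * b).
Proof. intros. apply (is_derive_mult (K:=R_AbsRing)); auto. intros; apply Rmult_comm. Qed.
Lemma rder_minus (f g : R -> R) x a b : is_derive f x a -> is_derive g x b -> is_derive (fun t => f t - g t) x (a - b).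
Proof. intros. apply (is_derive_minus (K:=R_AbsRing) (V:=R_NormedModule)); auto. Qed.
Lemma rder_plus (f g : R -> R) x a b : is_derive f x a -> is_derive g x b -> is_derive (fun t => f t + g t) x (a + b).
Proof. intros. apply (is_derive_plus (K:=R_AbsRing) (V:=R_NormedModule)); auto. Qed.

Lemma der_Cmult (f g : R -> C) x df dg : is_derive f x df -> is_derive g x dg ->
  is_derive (fun t => Cmult (f t) (g t)) x (Cplus (Cmult df (g x)) (Cmult (f x) dg)).
Proof.
  intros Hf Hg.
  pose proof (der_fst f x df Hf) as F1.
  pose proof (der_snd f x df Hf) as F2.
  pose proof (der_fst g x dg Hg) as G1.
  pose proof (der_snd g x dg Hg) as G2.
  destruct df as [a b]; destruct dg as [c d]; simpl in *.
  apply der_C; simpl.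
  - eapply is_derive_eq. apply rder_minus; apply rder_mult; eauto.
    simpl. ring.
  - eapply is_derive_eq. apply rder_plus; apply rder_mult; eauto.
    simpl. ring.
Qed.

Lemma rcont (f : R -> R) x : continuity_pt f x -> continuous f x.
Proof. apply continuity_pt_filterlim. Qed.
Lemma rcont' (f : R -> R) x : continuous f x -> continuity_pt f x.
Proof. apply continuity_pt_filterlim. Qed.

Lemma cont_Cmult (f g : R -> C) x : continuous f x -> continuous g x -> continuous (fun t => Cmult (f t) (g t)) x.
Proof.
  intros Hf Hg.
  pose proof (rcont' _ _ (cont_fst f x Hf)) as F1.
  pose proof (rcont' _ _ (cont_snd f x Hf)) as F2.
  pose proof (rcont' _ _ (cont_fst g x Hg)) as G1.
  pose proof (rcont' _ _ (cont_snd g x Hg)) as G2.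
  apply cont_C; simpl; apply rcont.
  - apply continuity_pt_minus; apply continuity_pt_mult; auto.
  - apply continuity_pt_plus; apply continuity_pt_mult; auto.
Qed.

Lemma C_nz (z : C) : z <> RtoC 0 -> fst z ^ 2 + snd z ^ 2 <> 0.
Proof.
  intros H E. apply H. destruct z as [u v]; simpl in *.
  assert (u = 0) by nra. assert (v = 0) by nra. subst. reflexivity.
Qed.

Lemma cont_Cinv (f : R -> C) x : continuous f x -> f x <> RtoC 0 -> continuous (fun t => Cinv (f t)) x.
Proof.
  intros Hf Hn.
  pose proof (rcont' _ _ (cont_fst f x Hf)) as F1.
  pose proof (rcont' _ _ (cont_snd f x Hf)) as F2.
  pose proof (C_nz _ Hn) as N.
  assert (D : continuity_pt (fun t => fst (f t) ^ 2 + snd (f t) ^ 2) x).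
  { apply continuity_pt_plus; apply continuity_pt_mult; try apply continuity_pt_mult; auto; apply continuity_pt_const; intros ? ?; reflexivity. }
  apply cont_C; simpl; apply rcont.
  - apply continuity_pt_div; auto.
  - apply continuity_pt_div; auto. apply continuity_pt_opp; auto.
Qed.

Lemma der_const_C (z : C) x : is_derive (fun _ : R => z) x (RtoC 0).
Proof. exact (is_derive_const (K:=R_AbsRing) (V:=C_R_NormedModule) z x). Qed.

Lemma der_cont_C (f : R -> C) x d : is_derive f x d -> continuous f x.
Proof. intros H. apply (filterdiff_continuous (K:=R_AbsRing) (U:=R_NormedModule) (V:=C_R_NormedModule)). exists (fun y => scal y d). exact H. Qed.

Lemma rec_props (x0 : R) (g : nat -> R -> C) (Y : nat -> R -> C)
 (Hg : forall m t, continuous (g m) t)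
 (H0 : forall t, Y 0%nat t = RtoC 1)
 (HS : forall m t, Y (S m) t = Cmult (RtoC (INR (S m)))
     (@RInt C_R_CompleteNormedModule (fun s => Cmult (Y m s) (g (S m) s)) x0 t)) :
 forall m, (forall t, continuous (Y m) t) /\
   (forall t, is_derive (Y (S m)) t (Cmult (RtoC (INR (S m))) (Cmult (Y m t) (g (S m) t)))).
Proof.
  assert (A : forall m, (forall t, continuous (Y m) t) ->
     forall t, is_derive (Y (S m)) t (Cmult (RtoC (INR (S m))) (Cmult (Y m t) (g (S m) t)))).
  { intros m Hc t.
    set (F := fun s => Cmult (Y m s) (g (S m) s)).
    assert (HF : forall s, continuous F s).
    { intros s. apply cont_Cmult; auto. }
    assert (HI : is_derive (fun t => @RInt C_R_CompleteNormedModule F x0 t) t (F t)).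
    { apply is_derive_RInt with x0.
      exists (mkposreal 1 Rlt_0_1). intros y _.
      apply (RInt_correct (V:=C_R_CompleteNormedModule)).
      apply ex_RInt_continuous. intros; auto.
      auto. }
    eapply is_derive_ext. intros s. symmetry. apply HS.
    eapply is_derive_eq. apply der_Cmult. apply der_const_C. exact HI.
    unfold F. match goal with |- ?a = ?b => change (@eq C a b) end. ring. }
  assert (Cn : forall m t, continuous (Y m) t).
  { induction m.
  - intros t. apply (continuous_ext (fun _ => RtoC 1)). intros; symmetry; auto. apply continuous_const.
  - intros t. eapply der_cont_C. apply A. exact IHm. }
  intros m; split; [apply Cn | apply A, Cn].
Qed.

Definition clamp (a b t : R) := Rmax a (Rmin b t).

Lemma clamp_in a b t : a <= b -> a <= clamp a b t <= b.
Proof. intros; unfold clamp, Rmax, Rmin; repeat destruct Rle_dec; lra. Qed.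

Lemma clamp_id a b t : a <= t <= b -> clamp a b t = t.
Proof. intros; unfold clamp, Rmax, Rmin; repeat destruct Rle_dec; lra. Qed.

Lemma clamp_lip a b s t : a <= b -> Rabs (clamp a b s - clamp a b t) <= Rabs (s - t).
Proof. intros; unfold clamp, Rmax, Rmin; repeat destruct Rle_dec; unfold Rabs; repeat destruct Rcase_abs; lra. Qed.

Lemma clamp_cont (Phi : R -> C) a b (Hab : a <= b)
  (Hcont : forall y, a <= y <= b ->
     filterlim Phi (within (fun t => a <= t <= b) (locally y)) (locally (Phi y))) :
  forall t, continuous (fun s => Phi (clamp a b s)) t.
Proof.
  intros t. unfold continuous.
  apply (filterlim_comp _ _ _ (fun s => clamp a b s) Phi (locally t)
     (within (fun t => a <= t <= b) (locally (clamp a b t)))).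
  2: apply Hcont, clamp_in, Hab.
  intros P [eps HP]. exists eps. intros y Hy. apply HP.
  2: apply clamp_in, Hab.
  revert Hy. unfold ball; simpl; unfold AbsRing_ball, abs, minus, plus, opp; simpl.
  intros Hy. pose proof (clamp_lip a b y t Hab). 
  replace (clamp a b y + - clamp a b t) with (clamp a b y - clamp a b t) by ring.
  replace (y + - t) with (y - t) in Hy by ring. lra.
Qed.

Lemma der_sum (F : nat -> R -> C) (dF : nat -> C) N t :
  (forall k, is_derive (F k) t (dF k)) ->
  is_derive (fun s => sum_n (fun k => F k s) N) t (sum_n dF N).
Proof.
  intros H. induction N.
  - apply (is_derive_ext (F 0%nat)). intros s. rewrite sum_O. reflexivity.
    rewrite sum_O. apply H.
  - apply (is_derive_ext (fun s => plus (sum_n (fun k => F k s) N) (F (S N) s))).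
    intros s. rewrite sum_Sn. reflexivity.
    rewrite sum_Sn.
    apply (is_derive_plus (K:=R_AbsRing) (V:=C_R_NormedModule)); auto.
Qed.

Lemma sum_zero (N : nat) : sum_n (fun _ => RtoC 0) N = RtoC 0.
Proof.
  induction N. rewrite sum_O; reflexivity.
  rewrite sum_Sn, IHN. change (Cplus (RtoC 0) (RtoC 0) = RtoC 0). ring.
Qed.

Lemma telesc (T : nat -> C) m :
  sum_n (fun k => Cminus (T k) (match k with O => RtoC 0 | S j => T j end)) m = T m.
Proof.
  induction m. rewrite sum_O. change (Cminus (T 0%nat) (RtoC 0) = T 0%nat). ring.
  rewrite sum_Sn, IHm. change (Cplus (T m) (Cminus (T (S m)) (T m)) = T (S m)). ring.
Qed.

Lemma parity n j (z : C) : Nat.even n = true -> (j <= n)%nat -> z <> RtoC 0 ->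
  powm1 (n - j) (Cinv z) = powm1 (S j) z.
Proof.
  intros Hn Hj Hz. unfold powm1.
  rewrite Nat.even_sub by exact Hj. rewrite Hn, Nat.even_succ, <- Nat.negb_even.
  destruct (Nat.even j); simpl. reflexivity. field. exact Hz.
Qed.

Lemma Xpow_x0 Phi x0 m : Xpow Phi x0 (S m) x0 = RtoC 0.
Proof.
  cbn [Xpow]. rewrite RInt_point. change (Cmult (RtoC (INR (S m))) (RtoC 0) = RtoC 0). ring.
Qed.
Lemma Xtpow_x0 Phi x0 m : Xtpow Phi x0 (S m) x0 = RtoC 0.
Proof.
  cbn [Xtpow]. rewrite RInt_point. change (Cmult (RtoC (INR (S m))) (RtoC 0) = RtoC 0). ring.
Qed.

Lemma Xpow_ext Phi Psi x0 a b : a <= x0 <= b -> (forall t, a <= t <= b -> Phi t = Psi t) ->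
  forall k x, a <= x <= b -> Xpow Phi x0 k x = Xpow Psi x0 k x.
Proof.
  intros Hx0 HE k. induction k; intros x Hx; [reflexivity|].
  cbn [Xpow]. f_equal. apply RInt_ext. intros t Ht.
  assert (a <= t <= b) by (unfold Rmin, Rmax in Ht; destruct Rle_dec; lra).
  rewrite IHk, HE by auto. reflexivity.
Qed.
Lemma Xtpow_ext Phi Psi x0 a b : a <= x0 <= b -> (forall t, a <= t <= b -> Phi t = Psi t) ->
  forall k x, a <= x <= b -> Xtpow Phi x0 k x = Xtpow Psi x0 k x.
Proof.
  intros Hx0 HE k. induction k; intros x Hx; [reflexivity|].
  cbn [Xtpow]. f_equal. apply RInt_ext. intros t Ht.
  assert (a <= t <= b) by (unfold Rmin, Rmax in Ht; destruct Rle_dec; lra).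
  rewrite IHk, HE by auto. reflexivity.
Qed.

Definition dY (Y g : nat -> R -> C) m t := match m with O => RtoC 0
  | S j => Cmult (RtoC (INR (S j))) (Cmult (Y j t) (g (S j) t)) end.

Definition Tt (P Q psi : nat -> R -> C) n k t :=
  Cmult (RtoC ((-1)^k * Binomial.C n k * INR (n-k)))
    (Cmult (P k t) (Cmult (Q (n-k-1)%nat t) (psi (n-k)%nat t))).

Lemma Cinv_nz (z : C) : z <> RtoC 0 -> Cinv z <> RtoC 0.
Proof.
  intros H E. pose proof (Cinv_l z H) as L. rewrite E in L.
  assert (RtoC 0 * z = RtoC 1)%C as L' by exact L.
  rewrite Cmult_0_l in L'. apply C1_nz. symmetry; exact L'.
Qed.

Theorem theorem3 (a b : R) (Phi : R -> C)
  (Hcont : forall y, a <= y <= b ->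
     filterlim Phi (within (fun t => a <= t <= b) (locally y)) (locally (Phi y)))
  (Hnz : forall y, a <= y <= b -> Phi y <> RtoC 0)
  (x0 : R) (Hx0 : a <= x0 <= b)
  (n : nat) (Hn2 : (2 <= n)%nat) (Hev : Nat.even n = true)
  (x : R) (Hx : a <= x <= b) :
  sum_n (fun k => Cmult (RtoC ((-1) ^ k * Binomial.C n k))
                        (Cmult (Xpow Phi x0 k x) (Xtpow Phi x0 (n - k) x))) n
  = RtoC 0.
Proof.
  assert (Hab : a <= b) by lra.
  set (Ph := fun s => Phi (clamp a b s)).
  assert (PhC : forall t, continuous Ph t) by (apply clamp_cont; auto).
  assert (PhN : forall t, Ph t <> RtoC 0) by (intros t; apply Hnz, clamp_in, Hab).
  assert (PhE : forall t, a <= t <= b -> Phi t = Ph t)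
    by (intros t Ht; unfold Ph; rewrite clamp_id; auto).
  rewrite (sum_n_ext _ (fun k => Cmult (RtoC ((-1) ^ k * Binomial.C n k))
                        (Cmult (Xpow Ph x0 k x) (Xtpow Ph x0 (n - k) x)))).
  2:{ intros k. rewrite (Xpow_ext Phi Ph x0 a b), (Xtpow_ext Phi Ph x0 a b); auto. }
  set (P := Xpow Ph x0). set (Q := Xtpow Ph x0).
  set (phi := fun m t => powm1 m (Ph t)).
  set (psi := fun m t => powm1 m (Cinv (Ph t))).
  assert (RP := rec_props x0 phi P).
  assert (RQ := rec_props x0 psi Q).
  assert (DP : forall m t, is_derive (P m) t (dY P phi m t)).
  { intros [|m] t.
    - apply (is_derive_ext (K:=R_AbsRing) (V:=C_R_NormedModule) (fun _ => RtoC 1)). reflexivity. apply der_const_C.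
    - apply RP; [| reflexivity | reflexivity].
      intros k s. unfold phi, powm1. destruct (Nat.even k).
      apply PhC. apply cont_Cinv; auto. }
  assert (DQ : forall m t, is_derive (Q m) t (dY Q psi m t)).
  { intros [|m] t.
    - apply (is_derive_ext (K:=R_AbsRing) (V:=C_R_NormedModule) (fun _ => RtoC 1)). reflexivity. apply der_const_C.
    - apply RQ; [| reflexivity | reflexivity].
      intros k s. unfold psi, powm1. destruct (Nat.even k).
      apply cont_Cinv; auto. apply cont_Cinv. apply cont_Cinv; auto. apply Cinv_nz; auto. }
  set (c := fun k => (-1) ^ k * Binomial.C n k).
  set (Sf := fun s => sum_n (fun k => Cmult (RtoC (c k)) (Cmult (P k s) (Q (n - k)%nat s))) n).
  assert (Sder : forall t, is_derive Sf t (RtoC 0)).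
  { intros t. eapply is_derive_eq. apply der_sum. intros k.
    apply der_Cmult. apply der_const_C. apply der_Cmult. apply DP. apply DQ.
    rewrite (sum_n_ext_loc _ (fun k => Cminus (Tt P Q psi n k t)
         (match k with O => RtoC 0 | S j => Tt P Q psi n j t end))).
    - rewrite telesc. unfold Tt. rewrite Nat.sub_diag. change (INR 0) with 0.
      rewrite Rmult_0_r. change (Cmult (RtoC 0) (Cmult (P n t) (Cmult (Q (0 - 1)%nat t) (psi 0%nat t))) = RtoC 0).
      ring.
    - intros k Hk.
      assert (Hi : Cmult (RtoC (c k)) (Cmult (P k t) (dY Q psi (n-k) t)) = Tt P Q psi n k t).
      { unfold Tt. fold (c k). destruct (n - k)%nat as [|j] eqn:E.
        - simpl dY. change (INR 0) with 0. rewrite Rmult_0_r. ring.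
        - cbn [dY]. replace (S j - 1)%nat with j by lia. rewrite RtoC_mult. ring. }
      assert (Hii : Cmult (RtoC (c k)) (Cmult (dY P phi k t) (Q (n-k)%nat t)) =
                    Copp (match k with O => RtoC 0 | S j => Tt P Q psi n j t end)).
      { destruct k as [|j].
        - simpl dY. ring.
        - cbn [dY]. unfold Tt.
          replace (n - j - 1)%nat with (n - S j)%nat by lia.
          replace (psi (n - j)%nat t) with (phi (S j) t)
            by (unfold psi, phi; symmetry; apply parity; auto; lia).
          assert (Hc : c (S j) * INR (S j) = - ((-1)^j * Binomial.C n j * INR (n-j))).
          { unfold c. rewrite pascal_step3 by lia. simpl pow. field.
            apply not_0_INR; lia. }
          replace ((-1)^j * Binomial.C n j * INR (n-j)) with (- (c (S j) * INR (S j))) by lra.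
          rewrite RtoC_opp, RtoC_mult. ring. }
      set (M := match k with O => RtoC 0 | S j => Tt P Q psi n j t end) in *.
      assert (Hii' : M = Copp (Cmult (RtoC (c k)) (Cmult (dY P phi k t) (Q (n-k)%nat t))))
        by (rewrite Hii; ring).
      rewrite Hii', <- Hi.
      match goal with |- ?l = ?r => change (@eq C l r) end. ring. }
  change (Sf x = RtoC 0).
  assert (E0 : Sf x0 = RtoC 0).
  { unfold Sf. rewrite (sum_n_ext_loc _ (fun _ => RtoC 0)). apply sum_zero.
    intros k Hk. destruct k as [|k].
    - rewrite Nat.sub_0_r.
      assert (HQ : Q n x0 = RtoC 0) by (destruct n; [lia | apply Xtpow_x0]).
      rewrite HQ. match goal with |- ?l = ?r => change (@eq C l r) end. ring.
    - assert (HP : P (S k) x0 = RtoC 0) by apply Xpow_x0.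
      rewrite HP. match goal with |- ?l = ?r => change (@eq C l r) end. ring. }
  assert (H1 := is_RInt_derive (V:=C_R_CompleteNormedModule) Sf (fun _ => RtoC 0) x0 x
     (fun t _ => Sder t) (fun t _ => continuous_const _ t)).
  assert (H2 := is_RInt_const (V:=C_R_CompleteNormedModule) x0 x (RtoC 0)).
  apply is_RInt_unique in H1. apply is_RInt_unique in H2.
  rewrite H1 in H2. rewrite E0 in H2. clear H1.
  destruct (Sf x) as [u v]. revert H2.
  unfold minus, plus, opp, scal; simpl. unfold prod_plus, prod_opp, prod_scal; simpl.
  intros H2. injection H2. unfold plus, opp, scal; simpl.
  unfold mult; simpl. intros Hv Hu.
  apply injective_projections; simpl; lra.
Qed.
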